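(* Let $p$ be an odd prime, $q$ a power of $p$, $\xi$ a generator of $\mathbb F_q^*$, $\ell$ an odd prime with $\ell\ne p$ and $\ell\mid q-1$, and $m,n$ positive integers. Let $\ell^u$ exactly divide $q-1$, $v=\min\{m,u\}$, $\zeta=\xi^{(q-1)/\ell^v}$, and let $C$ be a $\lambda$-constacyclic code of length $2\ell^mp^n$ over $\mathbb F_q$, $\lambda\in\mathbb F_q^*$. Empty products are $1$. (I) If $c_1\in\mathbb F_q^*$, $c_1^{2\ell^mp^n}\lambda=1$ and $C=\big\langle\prod_{i=0}^{\ell^v-1}(X-c_1^{-1}\zeta^i)^{\varepsilon_i}(X+c_1^{-1}\zeta^i)^{\epsilon_i}\prod_{j=1}^{m-u}\prod_{1\le k\le\ell^v,\,\ell\nmid k}(X^{\ell^j}-c_1^{-\ell^j}\zeta^k)^{\tau_k^j}(X^{\ell^j}+c_1^{-\ell^j}\zeta^k)^{\sigma_k^j}\big\rangle$ with all exponents in $[0,p^n]$, then $$C^\perp=\Big\langle\prod_{i=0}^{\ell^v-1}(X-c_1\zeta^{-i})^{p^n-\varepsilon_i}(X+c_1\zeta^{-i})^{p^n-\epsilon_i}\prod_{j=1}^{m-u}\prod_{\substack{k=1\\\ell\nmid k}}^{\ell^v}(X^{\ell^j}-c_1^{\ell^j}\zeta^{-k})^{p^n-\tau_k^j}(X^{\ell^j}+c_1^{\ell^j}\zeta^{-k})^{p^n-\sigma_k^j}\Big\rangle.$$ (II.A) If $m\le u$, $c_2\in\mathbb F_q^*$, $c_2^{2\ell^mp^n}\lambda=\xi^{\ell^vp^n}$,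 $\alpha=\xi^{(q-1)/\ell^m}$ and $C=\langle\prod_{i=0}^{\ell^m-1}(X^2-c_2^{-2}\xi\alpha^i)^{\varepsilon_i}\rangle$ with $0\le\varepsilon_i\le p^n$, then $C^\perp=\langle\prod_{i=0}^{\ell^m-1}(X^2-c_2^{2}\xi^{-1}\alpha^{-i})^{p^n-\varepsilon_i}\rangle$. (II.B) If $m>u$, $c_2\in\mathbb F_q^*$, $c_2^{2\ell^mp^n}\lambda=\xi^{\ell^vp^n}$, $\beta$ is the element of $\langle\xi^{\ell^u}\rangle$ with $\beta^{\ell^m}\xi^{\ell^u}=1$, and $C=\big\langle\prod_{i=0}^{\ell^u-1}(X^2-c_2^{-2}\beta^{-1}\zeta^i)^{\varepsilon_i}\prod_{j=1}^{m-u}\prod_{1\le k\le\ell^u,\,\ell\nmid k}(X^{2\ell^j}-c_2^{-2\ell^j}\beta^{-\ell^j}\zeta^k)^{\sigma_k^j}\big\rangle$ with exponents in $[0,p^n]$, then $$C^\perp=\Big\langle\prod_{i=0}^{\ell^u-1}(X^2-c_2^{2}\beta\zeta^{-i})^{p^n-\varepsilon_i}\prod_{j=1}^{m-u}\prod_{\substack{k=1\\\ell\nmid k}}^{\ell^u}(X^{2\ell^j}-c_2^{2\ell^j}\beta^{\ell^j}\zeta^{-k})^{p^n-\sigma_k^j}\Big\rangle.$$ (III) Suppose $1\le j\le 2\ell^v-1$, $j\ne\ell^v$, $d_1\in\mathbb F_q^*$ with $d_1^{2\ell^mp^n}\lambda=\xi^{jp^n}$, $j=y\ell^z$ with $\gcd(y,\ell)=1$,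 $0\le z\le v-1$, and $\delta=\xi^{(q-1)/\ell^z}$. (III.A) If $y$ is odd and $C=\langle\prod_{i=0}^{\ell^z-1}(X^{2\ell^{m-z}}-d_1^{-2\ell^{m-z}}\delta^i\xi^y)^{\varepsilon_i}\rangle$ with $0\le\varepsilon_i\le p^n$, then $C^\perp=\langle\prod_{i=0}^{\ell^z-1}(X^{2\ell^{m-z}}-d_1^{2\ell^{m-z}}\delta^{-i}\xi^{-y})^{p^n-\varepsilon_i}\rangle$. (III.B) If $y=2y_0$ and $C=\langle\prod_{i=0}^{\ell^z-1}(X^{\ell^{m-z}}-d_1^{-\ell^{m-z}}\delta^i\xi^{y_0})^{\varepsilon_i}(X^{\ell^{m-z}}+d_1^{-\ell^{m-z}}\delta^i\xi^{y_0})^{\epsilon_i}\rangle$ with $0\le\varepsilon_i,\epsilon_i\le p^n$, then $C^\perp=\langle\prod_{i=0}^{\ell^z-1}(X^{\ell^{m-z}}-d_1^{\ell^{m-z}}\delta^{-i}\xi^{-y_0})^{p^n-\varepsilon_i}(X^{\ell^{m-z}}+d_1^{\ell^{m-z}}\delta^{-i}\xi^{-y_0})^{p^n-\epsilon_i}\rangle$. In each case $C^\perp$ is a $\lambda^{-1}$-constacyclic code.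
   Context: For $\mu\in\mathbb F_q^*$, a $\mu$-constacyclic code of length $N$ over $\mathbb F_q$ is a linear subspace of $\mathbb F_q^N$ closed under $(c_0,\dots,c_{N-1})\mapsto(\mu c_{N-1},c_0,\dots,c_{N-2})$; such codes are identified with ideals of $\mathbb F_q[X]/\langle X^N-\mu\rangle$, and $\langle g(X)\rangle$ denotes the ideal generated by the image of $g(X)$ (in the corresponding quotient ring; for $C^\perp$ the ring is $\mathbb F_q[X]/\langle X^N-\lambda^{-1}\rangle$). $C^\perp$ is the dual code with respect to the standard Euclidean inner product on $\mathbb F_q^N$. $\langle\xi^k\rangle$ denotes the subgroup of $\mathbb F_q^*$ generated by $\xi^k$. *)

(* Defs.v *)
From HB Require Import structures.
From mathcomp Require Import all_boot all_order all_algebra all_field.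
Set Implicit Arguments. Unset Strict Implicit. Unset Printing Implicit Defensive.
Import GRing.Theory.
Local Open Scope ring_scope.

Section Codes.
Variables (F : finFieldType) (N : nat).

(* c_k, with the convention c_k = 0 outside 0 <= k < N (never used out of range). *)
Definition coord (c : 'rV[F]_N) (k : nat) : F :=
  if insub k is Some i then c 0 i else 0.

Definition constashift (mu : F) (c : 'rV[F]_N) : 'rV[F]_N :=
  \row_(i < N) (if (i : nat) == 0%N then mu * coord c N.-1 else coord c i.-1).

Definition linear_code (C : {set 'rV[F]_N}) : Prop :=
  0 \in C /\ (forall (a : F) (x y : 'rV[F]_N), x \in C -> y \in C -> a *: x + y \in C).

Definition constacyclic (mu : F) (C : {set 'rV[F]_N}) : Prop :=
  linear_code C /\ (forall c, c \in C -> constashift mu c \in C).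

Definition dual_code (C : {set 'rV[F]_N}) : {set 'rV[F]_N} :=
  [set v | [forall c in C, (c *m v^T) 0 0 == 0]].

(* c (identified with c_0 + c_1 X + ... + c_{N-1} X^{N-1}) lies in the ideal
   generated by the image of g in F[X]/<X^N - mu>. *)
Definition in_ideal (mu : F) (g : {poly F}) (c : 'rV[F]_N) : Prop :=
  exists h : {poly F}, rVpoly c = (g * h) %% ('X^N - mu%:P).

Definition generated_by (mu : F) (g : {poly F}) (C : {set 'rV[F]_N}) : Prop :=
  forall c, c \in C <-> in_ideal mu g c.

End Codes.

(* Main.v *)
Require Import Defs.
From HB Require Import structures.
From mathcomp Require Import all_boot all_order all_algebra all_field.
From mathcomp Require Import zify ring.
Import GRing.Theory.
Local Open Scope ring_scope.

Module Aux.
Set Implicit Arguments. Unset Strict Implicit. Unset Printing Implicit Defensive.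
Section Rev.
Variable F : fieldType.
Implicit Types p q : {poly F}.

Definition rvp (k : nat) p : {poly F} := \poly_(i < k) p`_(k.-1 - i).
Definition revp p := rvp (size p) p.

Lemma coef_rvp k p i : (rvp k p)`_i = if (i < k)%N then p`_(k.-1 - i) else 0.
Proof. by rewrite coef_poly. Qed.

Lemma size_rvp k p : (size (rvp k p) <= k)%N.
Proof. exact: size_poly. Qed.

Lemma rvpD k p q : rvp k (p + q) = rvp k p + rvp k q.
Proof. by apply/polyP=> i; rewrite coefD !coef_rvp coefD; case: ifP; rewrite ?addr0. Qed.

Lemma rvp0 k : rvp k 0 = 0.
Proof. by apply/polyP=> i; rewrite coef_rvp !coef0 if_same. Qed.

Lemma rvpZ k c p : rvp k (c *: p) = c *: rvp k p.
Proof. by apply/polyP=> i; rewrite coefZ !coef_rvp coefZ; case: ifP; rewrite ?mulr0. Qed.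

Lemma rvp_sum k I (r : seq I) (P : pred I) (G : I -> {poly F}) :
  rvp k (\sum_(i <- r | P i) G i) = \sum_(i <- r | P i) rvp k (G i).
Proof. by apply: big_morph; [exact: rvpD|exact: rvp0]. Qed.

Lemma rvpXn k n : (n < k)%N -> rvp k 'X^n = 'X^(k.-1 - n).
Proof.
move=> nk; apply/polyP=> i; rewrite coef_rvp !coefXn.
case: ltnP => ik.
  by have -> : (k.-1 - i == n)%N = (i == k.-1 - n)%N by apply/eqP/eqP; lia.
by have -> : (i == k.-1 - n)%N = false by apply/eqP; lia.
Qed.

Lemma poly_expand a p : (size p <= a)%N -> p = \sum_(i < a) p`_i *: 'X^i.
Proof.
move=> sp; rewrite -poly_def; apply/polyP=> i; rewrite coef_poly.
by case: ltnP => // ai; rewrite nth_default // (leq_trans sp).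
Qed.

Lemma rvpM a b p q : (size p <= a.+1)%N -> (size q <= b.+1)%N ->
  rvp (a + b).+1 (p * q) = rvp a.+1 p * rvp b.+1 q.
Proof.
move=> sp sq.
have E : forall c (r : {poly F}), (size r <= c.+1)%N -> rvp c.+1 r = \sum_(i < c.+1) r`_i *: 'X^(c - i).
  move=> c r sr; rewrite {1}(poly_expand sr) rvp_sum.
  by apply: eq_bigr => i _; rewrite rvpZ rvpXn.
rewrite (E _ _ sp) (E _ _ sq) {1}(poly_expand sp) {1}(poly_expand sq).
rewrite mulr_suml rvp_sum mulr_suml; apply: eq_bigr => i _.
rewrite mulr_sumr rvp_sum mulr_sumr; apply: eq_bigr => j _.
rewrite -scalerAl -scalerAr scalerA rvpZ -scalerAl -scalerAr scalerA -!exprD rvpXn.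
  by congr (_ *: 'X^_); have := ltn_ord i; have := ltn_ord j; lia.
by have := ltn_ord i; have := ltn_ord j; lia.
Qed.

Lemma rvpK k p : (size p <= k)%N -> rvp k (rvp k p) = p.
Proof.
move=> sp; apply/polyP=> i; rewrite !coef_rvp.
case: ltnP => ik; last by rewrite nth_default // (leq_trans sp).
rewrite ifT; last by lia.
by congr (p`_ _); lia.
Qed.

Lemma revpM p q : revp (p * q) = revp p * revp q.
Proof.
have [->|p0] := eqVneq p 0; first by rewrite mul0r /revp size_poly0 rvp0 mul0r.
have [->|q0] := eqVneq q 0; first by rewrite mulr0 /revp size_poly0 rvp0 mulr0.
rewrite /revp size_mul //.
have : (0 < size p)%N by rewrite size_poly_gt0.
have : (0 < size q)%N by rewrite size_poly_gt0.
case Ep: (size p) => [//|a]; case Eq: (size q) => [//|b] _ _ /=.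
rewrite addnS; apply: rvpM; rewrite ?Ep ?Eq //.
Qed.

Lemma revp1 : revp 1 = 1.
Proof. by rewrite /revp size_poly1; apply/polyP=> i; rewrite coef_rvp !coef1; case: i. Qed.

Lemma revp_prod I (r : seq I) (P : pred I) (G : I -> {poly F}) :
  revp (\prod_(i <- r | P i) G i) = \prod_(i <- r | P i) revp (G i).
Proof. by apply: big_morph; [exact: revpM|exact: revp1]. Qed.

Lemma revpX p e : revp (p ^+ e) = revp p ^+ e.
Proof. by elim: e => [|e IH]; rewrite ?expr0 ?revp1 // !exprS revpM IH. Qed.

Lemma revp_XnsubC n c : (0 < n)%N -> c != 0 ->
  revp ('X^n - c%:P) = (- c) *: ('X^n - c^-1%:P).
Proof.
move=> n0 c0; rewrite /revp size_XnsubC //.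
apply/polyP=> i; rewrite coef_rvp coefZ !coefB !coefXn !coefC /=.
case: ltnP => ni.
  have [->|i0] := eqVneq i 0%N.
    rewrite subn0 eqxx /= (negbTE (lt0n_neq0 n0)); rewrite eq_sym (negbTE (lt0n_neq0 n0)).
    by rewrite subr0 (_ : false%:R = 0) // sub0r mulrN mulNr opprK mulfV.
  have [->|iN] := eqVneq i n.
    have e2 : (0%N == n) = false by apply/eqP; lia.
    by rewrite subnn e2 eqxx (_ : false%:R = 0) // (_ : true%:R = 1) // sub0r subr0 mulr1.
  have e3 : ((n - i)%N == n) = false by apply/eqP; lia.
  have e4 : ((n - i)%N == 0%N) = false by apply/eqP; lia.
  by rewrite e3 e4 (_ : false%:R = 0) // subr0 mulr0.
have e3 : (i == n) = false by apply/eqP; lia.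
have e4 : (i == 0%N) = false by apply/eqP; lia.
by rewrite e3 e4 (_ : false%:R = 0) // subr0 mulr0.
Qed.

End Rev.

Ltac szlia :=
  repeat (match goal with H : context [size _] |- _ => revert H end);
  repeat (match goal with |- context [size ?p] => let n := fresh "sz" in move: (size p) => n end);
  intros; lia.

Section Core.
Variable F : finFieldType.

Lemma coordE N (c : 'rV[F]_N) k : Defs.coord c k = (rVpoly c)`_k.
Proof. by rewrite coef_rVpoly. Qed.

Lemma in_idealE N mu (d : {poly F}) (c : 'rV[F]_N) : (0 < N)%N ->
  d %| 'X^N - mu%:P -> in_ideal mu d c <-> d %| rVpoly c.
Proof.
move=> N0 dv; split.
  by case=> h ->; rewrite -(dvdp_mod _ dv); exact: dvdp_mulIl.
case/dvdpP => h E; exists h.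
by rewrite mulrC -E modp_small // size_XnsubC // ltnS size_poly.
Qed.

Lemma shiftE N mu (c : 'rV[F]_N) : (0 < N)%N ->
  rVpoly (constashift mu c) = 'X * rVpoly c - (rVpoly c)`_N.-1 *: ('X^N - mu%:P).
Proof.
move=> N0; apply/polyP=> k.
rewrite coef_rVpoly coefB coefZ coefXM coefB coefXn coefC.
case: insubP => [[i Hi] /= ik <-| nk]; rewrite ?mxE ?coordE /=.

  have [->|i0] := eqVneq i 0%N.
    have e : (0 == N)%N = false by apply/eqP; lia.
    by rewrite e (_ : false%:R = 0) // !sub0r mulrN opprK mulrC.
  have e : (i == N)%N = false by apply/eqP; lia.
  by rewrite e (_ : false%:R = 0) // subr0 mulr0 subr0.
have [->|kN] := eqVneq k N.
  rewrite (_ : true%:R = 1) //.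
  have e : (N == 0)%N = false by apply/eqP; lia.
  by rewrite e subr0 mulr1 subrr.
have e : (k == 0)%N = false by apply/eqP; lia.
rewrite e (_ : false%:R = 0) // subr0 mulr0 subr0 coef_rVpoly.
by case: insubP => // i /= ik; lia.
Qed.

Lemma gen_cc N mu (d : {poly F}) (C : {set 'rV[F]_N}) : (0 < N)%N ->
  d %| 'X^N - mu%:P -> generated_by mu d C -> constacyclic mu C.
Proof.
move=> N0 dv gen.
have E c : c \in C <-> d %| rVpoly c := iff_trans (gen c) (in_idealE c N0 dv).
split; [split|].
- by apply/E; rewrite linear0 dvdp0.
- move=> a x y /E hx /E hy; apply/E; rewrite linearP /= -mul_polyC.
  by apply: dvdp_add => //; exact: dvdp_mull.
- move=> c /E hc; apply/E; rewrite shiftE //.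
  by apply: dvdp_sub; [exact: dvdp_mull| rewrite -mul_polyC; exact: dvdp_mull].
Qed.


Lemma rvpM' k a b (p q : {poly F}) : (size p <= a)%N -> (size q <= b)%N ->
  (0 < a)%N -> (0 < b)%N -> k = (a + b).-1 -> rvp k (p * q) = rvp a p * rvp b q.
Proof.
case: a => // a; case: b => // b sp sq _ _ ->.
have -> : (a.+1 + b.+1).-1 = (a + b).+1 by lia.
exact: rvpM.
Qed.

Definition sc (p q : {poly F}) := exists2 k : F, k != 0 & p = k *: q.

Lemma dot_coef N (c v : 'rV[F]_N.+1) :
  (c *m v^T) 0 0 = (rVpoly c * rvp N.+1 (rVpoly v))`_N.
Proof.
rewrite mxE coefM; apply: eq_bigr => j _; rewrite !mxE coef_rVpoly_ord coef_rvp /=.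
rewrite ifT; last by have := ltn_ord j; lia.
by rewrite subKn ?coef_rVpoly_ord // -ltnS ltn_ord.
Qed.

Lemma dual_core N (lam : F) (g h h' : {poly F}) (C : {set 'rV[F]_N}) :
  (0 < N)%N -> lam != 0 -> g * h = 'X^N - lam%:P -> sc (revp h) h' ->
  generated_by lam g C ->
  generated_by lam^-1 h' (dual_code C) /\ constacyclic lam^-1 (dual_code C).
Proof.
case: N C => [//|N] C _ l0 fgh [kap k0 Eh] gen.
set f := 'X^(N.+1) - lam%:P in fgh.
have sf : size f = N.+2 by rewrite size_XnsubC.
have g0 : g != 0 by apply/eqP => g0; move: sf; rewrite -fgh g0 mul0r size_poly0.
have h0 : h != 0 by apply/eqP => h0; move: sf; rewrite -fgh h0 mulr0 size_poly0.
have sgp : (0 < size g)%N by rewrite size_poly_gt0.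
have shp : (0 < size h)%N by rewrite size_poly_gt0.
have sz : (size g + size h = N.+3)%N.
  have X : (0 < size g + size h)%N by rewrite addn_gt0 sgp.
  by move: sf; rewrite -fgh size_mul // => e; rewrite -(prednK X) e.
have h00 : h`_0 != 0.
  have : f`_0 = - lam by rewrite coefB coefXn coefC /= sub0r.
  rewrite -fgh coef0M => e; apply/eqP => h00; move: e; rewrite h00 mulr0 => /eqP.
  by rewrite eq_sym oppr_eq0 (negbTE l0).
have szr : size (revp h) = size h.
  by rewrite /revp /rvp size_poly_eq // subnn.
have szh' : size h' = size h by rewrite -szr Eh size_scale.
have dvg : g %| f by rewrite -fgh dvdp_mulIl.
have dvh' : h' %| 'X^(N.+1) - lam^-1%:P.
  have : revp f = revp g * revp h by rewrite -fgh revpM.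
  rewrite /f revp_XnsubC // Eh -scalerAr => /(congr1 (fun p => (- lam)^-1 *: p)).
  rewrite scalerA mulVf ?oppr_eq0 // scale1r => ->.
  by rewrite scalerA dvdpZr ?mulf_neq0 ?invr_eq0 ?oppr_eq0 // dvdp_mulIr.
have E c : c \in C <-> g %| rVpoly c := iff_trans (gen c) (in_idealE c (ltn0Sn N) dvg).
have G : generated_by lam^-1 h' (dual_code C).
  move=> v; apply: iff_trans (iff_sym (in_idealE v (ltn0Sn N) dvh')).
  rewrite inE; split.
    move/forallP => H.
    set w := rvp N.+1 (rVpoly v).
    have Hc i : (i < (size h).-1)%N -> (g * w)`_(N - i) = 0.
      move=> ih; pose c : 'rV_N.+1 := poly_rV (g * 'X^i).
      have scs : (size (g * 'X^i)%R <= N.+1)%N.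
        have xn0 : 'X^i != 0 :> {poly F} by rewrite -size_poly_gt0 size_polyXn.
        rewrite size_mul // size_polyXn.
        szlia.
      have cC : c \in C by apply/E; rewrite poly_rV_K // dvdp_mulIl.
      move: (H c); rewrite cC /= dot_coef poly_rV_K // => /eqP.
      by rewrite mulrAC coefMXn ifF //; apply/negbTE; rewrite -leqNgt; lia.
    set r := g * w.
    have sw : (size w <= N.+1)%N by apply: size_rvp.
    have sr : (size r <= size g + N)%N.
      by apply: leq_trans (size_polyMleq _ _) _; szlia.
    pose A := \poly_(i < (size g).-1) r`_i.
    pose B := \poly_(i < (size g).-1) r`_(N.+1 + i).
    have Er : r = A + 'X^(N.+1) * B.
      apply/polyP=> k; rewrite coefD coefXnM !coef_poly.
      case: (ltnP k (size g).-1) => ksg.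
        rewrite ifT ?addr0 //; szlia.
      rewrite add0r; case: (ltnP k N.+1) => kN.
        have H1 : (N - k < (size h).-1)%N by szlia.
        by have := Hc _ H1; rewrite subKn ?ltnS // => e; rewrite /r e.
      case: ltnP => kk.
        by rewrite subnKC.
      rewrite nth_default //; szlia.
    have sA : (size A <= (size g).-1)%N by apply: size_poly.
    have sB : (size B <= (size g).-1)%N by apply: size_poly.
    have key : g * (w - h * B) = A + lam%:P * B.
      rewrite mulrBr mulrA fgh -/r Er /f; ring.
    have wE : w = h * B.
      apply/eqP; rewrite -subr_eq0; apply/negPn/negP => nz.
      have : (size g <= size (g * (w - h * B))%R)%N.
        by rewrite size_mul //; move: nz; rewrite -size_poly_gt0; szlia.
      rewrite key => H1; have H2 := size_polyD A (lam%:P * B).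
      have H3 : (size (lam%:P * B)%R <= size B)%N by rewrite mul_polyC size_scale_leq.
      szlia.
    have vE : rVpoly v = rvp N.+1 w by rewrite /w rvpK // size_poly.
    have [B0|Bn0] := eqVneq B 0.
      by rewrite vE wE B0 mulr0 rvp0 dvdp0.
    have sBp : (0 < size B)%N by rewrite size_poly_gt0.
    rewrite vE wE (@rvpM' _ (size h) (size g).-1) //; try szlia.
    by rewrite -/(revp h) Eh -scalerAl dvdpZr // dvdp_mulIl.
  move=> hv; apply/forallP => c; apply/implyP => /E hc.
  have h'0 : h' != 0 by rewrite -size_poly_gt0 szh'.
  case/dvdpP: hv => b Eb; case/dvdpP: hc => a Ea.
  rewrite dot_coef Ea Eb.
  have [->|b0] := eqVneq b 0; first by rewrite mul0r rvp0 mulr0 coef0.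
  have sa : (size a <= (size h).-1)%N.
    have [->|a0] := eqVneq a 0; first by rewrite size_poly0.
    have : (size (a * g)%R <= N.+1)%N by rewrite -Ea size_poly.
    rewrite size_mul //; szlia.
  have sb : (size b <= (size g).-1)%N.
    have : (size (b * h')%R <= N.+1)%N by rewrite -Eb size_poly.
    rewrite size_mul // szh'; szlia.
  have sbp : (0 < size b)%N by rewrite size_poly_gt0.
  apply/eqP; rewrite [b * h']mulrC (@rvpM' _ (size h) (size g).-1) //; try by rewrite ?szh'; szlia.
  have Eh' : h' = kap^-1 *: revp h by rewrite Eh scalerA mulVf // scale1r.
  rewrite Eh' rvpZ /revp rvpK //.
  set rb := rvp _ b.
  have srb : (size rb <= (size g).-1)%N by apply: size_rvp.
  have -> : a * g * (kap^-1 *: h * rb) = f * (kap^-1 *: (a * rb)).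
    by rewrite -fgh -!mul_polyC; ring.
  have st : (size (kap^-1 *: (a * rb)) <= N)%N.
    apply: leq_trans (size_scale_leq _ _) _; apply: leq_trans (size_polyMleq _ _) _.
    szlia.
  rewrite /f mulrBl coefB coefXnM ltnSn coefCM (nth_default _ st) mulr0 subr0.
  done.
split => //; exact: gen_cc G.
Qed.

End Core.

Section Alg.
Variable F : fieldType.
Implicit Types p q Y : {poly F}.

Definition sc' p q := exists2 k : F, k != 0 & revp p = k *: q.

Lemma sc'1 : sc' 1 1.
Proof. by exists 1; rewrite ?oner_eq0 // revp1 scale1r. Qed.

Lemma sc'M p1 q1 p2 q2 : sc' p1 q1 -> sc' p2 q2 -> sc' (p1 * p2) (q1 * q2).
Proof.
case=> k1 k10 e1 [k2 k20 e2]; exists (k1 * k2); first by rewrite mulf_neq0.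
by rewrite revpM e1 e2 -scalerAl -scalerAr scalerA.
Qed.

Lemma sc'X p q e : sc' p q -> sc' (p ^+ e) (q ^+ e).
Proof.
move=> h; elim: e => [|e IH]; first by rewrite !expr0; exact: sc'1.
by rewrite !exprS; apply: sc'M.
Qed.

Lemma sc'_prod I (r : seq I) (P : pred I) (G H : I -> {poly F}) :
  (forall i, P i -> sc' (G i) (H i)) ->
  sc' (\prod_(i <- r | P i) G i) (\prod_(i <- r | P i) H i).
Proof.
move=> h; apply: (big_ind2 sc'); [exact: sc'1|exact: sc'M|exact: h].
Qed.

Lemma sc'_sub n c : (0 < n)%N -> c != 0 -> sc' ('X^n - c%:P) ('X^n - c^-1%:P).
Proof. by move=> n0 c0; exists (- c); rewrite ?oppr_eq0 // revp_XnsubC. Qed.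

Lemma sc'_add n c : (0 < n)%N -> c != 0 -> sc' ('X^n + c%:P) ('X^n + c^-1%:P).
Proof.
move=> n0 c0; have := sc'_sub n0 (_ : - c != 0); rewrite oppr_eq0 => /(_ c0).
by rewrite !polyCN !opprK invrN polyCN opprK.
Qed.

Lemma prod_root M z a Y : M.-primitive_root z ->
  \prod_(i < M) (Y - (a * z ^+ i)%:P) = Y ^+ M - (a ^+ M)%:P.
Proof.
move=> hz; have M0 := prim_order_gt0 hz.
have [->|a0] := eqVneq a 0.
  rewrite expr0n gtn_eqF // subr0.
  under eq_bigr do rewrite mul0r subr0.
  by rewrite prodr_const card_ord.
have E1 := factor_Xn_sub_1 hz; rewrite big_mkord in E1.
have E2 := congr1 (comp_poly (a^-1 *: Y)) E1.
rewrite rmorph_prod rmorphB rmorphXn /= comp_polyX rmorph1 in E2.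
transitivity (\prod_(i < M) (a *: ((a^-1 *: Y) - (z ^+ i)%:P))).
  apply: eq_bigr => i _; rewrite scalerBr scalerA mulfV // scale1r.
  by rewrite -mul_polyC -polyCM.
rewrite scaler_prod prodr_const card_ord.
have E3 : \prod_(i < M) (a^-1 *: Y - (z ^+ i)%:P) = (a^-1 *: Y) ^+ M - 1.
  by rewrite -E2; apply: eq_bigr => i _; rewrite comp_polyB comp_polyX comp_polyC.
rewrite E3 scalerBr exprZn scalerA -exprMn mulfV // expr1n scale1r.
by rewrite alg_polyC.
Qed.


Lemma prod_shift M (G : nat -> {poly F}) : G M = G 0%N ->
  \prod_(1 <= k < M.+1) G k = \prod_(i < M) G i.
Proof.
case: M G => [|M] G e; first by rewrite big_geq // big_ord0.
rewrite big_nat_recr //= e big_ord_recl mulrC; congr (_ * _).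
by rewrite big_add1 /= big_mkord.
Qed.

Lemma prod_dvd (G : nat -> {poly F}) l M : (0 < l)%N ->
  \prod_(1 <= k < (l * M)%N.+1 | (l %| k)%N) G k = \prod_(1 <= k < M.+1) G (l * k)%N.
Proof.
move=> l0; elim: M => [|M IH]; first by rewrite muln0 !big_geq.
rewrite big_nat_recr //= -IH mulnS.
rewrite (@big_cat_nat _ _ _ (l * M).+1) //=; last by lia.
congr (_ * _).
rewrite big_mkcond big_nat_recr /=; last by lia.
rewrite big1_seq ?mul1r.
  by rewrite ifT ?dvdn_add ?dvdn_mulr.
move=> i /andP[_]; rewrite mem_index_iota => /andP[i1 i2].
case: ifP => // /dvdnP[t et]; exfalso; move: i1 i2; rewrite et (mulnC t l) => h1.
by rewrite -mulnS ltn_pmul2l // ltnS leqNgt -(ltn_pmul2l l0) h1.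
Qed.


Lemma facI l v w z a Y : (0 < l)%N -> (0 < v)%N -> (l ^ v).-primitive_root z ->
  \prod_(i < l ^ v) (Y - (a * z ^+ i)%:P) *
  \prod_(1 <= j < w.+1) \prod_(1 <= k < (l ^ v).+1 | ~~ (l %| k)%N)
      (Y ^+ (l ^ j) - (a ^+ (l ^ j) * z ^+ k)%:P)
  = Y ^+ (l ^ (v + w)) - (a ^+ (l ^ (v + w)))%:P.
Proof.
move=> l0 v0 hz.
pose T s := Y ^+ (l ^ s) - (a ^+ (l ^ s))%:P.
have step j : \prod_(1 <= k < (l ^ v).+1 | ~~ (l %| k)%N)
    (Y ^+ (l ^ j) - (a ^+ (l ^ j) * z ^+ k)%:P) * T (j + v.-1)%N = T (j + v)%N.
  pose G k := Y ^+ (l ^ j) - (a ^+ (l ^ j) * z ^+ k)%:P.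
  have full : \prod_(1 <= k < (l ^ v).+1) G k = T (j + v)%N.
    rewrite prod_shift; last by rewrite /G /= (prim_expr_order hz) expr0.
    by rewrite prod_root // /T -!exprM -expnD.
  have hz' : (l ^ v.-1).-primitive_root (z ^+ l).
    have := dvdn_prim_root hz (dvdn_exp2l l (leq_pred v)).
    by rewrite -{2}(prednK v0) expnS mulnK ?expn_gt0 ?l0.
  have part : \prod_(1 <= k < (l ^ v).+1 | (l %| k)%N) G k = T (j + v.-1)%N.
    rewrite -{1}(prednK v0) expnS prod_dvd // prod_shift; last first.
      by rewrite /G /= -expnS prednK // (prim_expr_order hz) muln0 expr0.
    under eq_bigr do rewrite /G exprM.
    by rewrite prod_root // /T -!exprM -expnD.
  by rewrite -full [in RHS](bigID (fun k => (l %| k)%N)) /= part mulrC.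
have tele w' : \prod_(1 <= j < w'.+1) \prod_(1 <= k < (l ^ v).+1 | ~~ (l %| k)%N)
      (Y ^+ (l ^ j) - (a ^+ (l ^ j) * z ^+ k)%:P) * T v = T (v + w')%N.
  elim: w' => [|w' IH]; first by rewrite big_geq // mul1r addn0.
  rewrite big_nat_recr //= mulrAC IH mulrC.
  have := step w'.+1; rewrite (_ : (w'.+1 + v.-1 = v + w')%N); last by lia.
  by move=> ->; rewrite addnC.
by rewrite prod_root // mulrC tele.
Qed.

Lemma expN_odd (x : F) n : odd n -> (- x) ^+ n = - (x ^+ n).
Proof. by move=> on; rewrite exprNn -signr_odd on expr1 mulN1r. Qed.

Lemma frob Y c (r n : nat) : prime r -> r \in [pchar F] ->
  (Y - c%:P) ^+ (r ^ n) = Y ^+ (r ^ n) - (c ^+ (r ^ n))%:P.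
Proof.
move=> pp pc.
have hn : [pchar {poly F}].-nat (r ^ n)%N.
  by rewrite (eq_pnat _ (@pchar_poly F)) pnatX pnatE // pc.
by rewrite exprDn_pchar // exprNn_pchar // rmorphXn.
Qed.

Lemma split_pow (I : eqType) (r : seq I) (P : pred I) (A : I -> {poly F}) (e : I -> nat) (K : nat) :
  (forall i, i \in r -> P i -> (e i <= K)%N) ->
  (\prod_(i <- r | P i) A i ^+ e i) * (\prod_(i <- r | P i) A i ^+ (K - e i))
  = (\prod_(i <- r | P i) A i) ^+ K.
Proof.
move=> h; rewrite -big_split -prodrXl big_seq_cond [RHS]big_seq_cond.
by apply: eq_bigr => i /andP[ir Pi]; rewrite /= -exprD subnKC // h.
Qed.

Lemma split_pow2 (I J : eqType) (r : seq I) (s : seq J) (Q : pred J)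
    (A : I -> J -> {poly F}) (e : I -> J -> nat) (K : nat) :
  (forall i j, i \in r -> j \in s -> Q j -> (e i j <= K)%N) ->
  (\prod_(i <- r) \prod_(j <- s | Q j) A i j ^+ e i j) *
  (\prod_(i <- r) \prod_(j <- s | Q j) A i j ^+ (K - e i j))
  = (\prod_(i <- r) \prod_(j <- s | Q j) A i j) ^+ K.
Proof.
move=> h; rewrite -big_split -prodrXl big_seq [RHS]big_seq.
by apply: eq_bigr => i ir; rewrite /= split_pow // => j js Qj; apply: h.
Qed.

Lemma sc'_subX c : c != 0 -> sc' ('X - c%:P) ('X - c^-1%:P).
Proof. by move=> c0; have := @sc'_sub 1 c isT c0; rewrite expr1. Qed.

Lemma sc'_addX c : c != 0 -> sc' ('X + c%:P) ('X + c^-1%:P).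
Proof. by move=> c0; have := @sc'_add 1 c isT c0; rewrite expr1. Qed.

Lemma split_pair (I : eqType) (r : seq I) (P : pred I) (A B : I -> {poly F})
    (e e' : I -> nat) (K : nat) :
  (forall i, i \in r -> P i -> (e i <= K)%N /\ (e' i <= K)%N) ->
  (\prod_(i <- r | P i) (A i ^+ e i * B i ^+ e' i)) *
  (\prod_(i <- r | P i) (A i ^+ (K - e i) * B i ^+ (K - e' i)))
  = (\prod_(i <- r | P i) A i) ^+ K * (\prod_(i <- r | P i) B i) ^+ K.
Proof.
move=> h; rewrite !big_split /= mulrACA split_pow ?split_pow //.
  by move=> i ir Pi; case: (h i ir Pi).
by move=> i ir Pi; case: (h i ir Pi).
Qed.

Lemma split_pair2 (I J : eqType) (r : seq I) (s : seq J) (Q : pred J)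
    (A B : I -> J -> {poly F}) (e e' : I -> J -> nat) (K : nat) :
  (forall i j, i \in r -> j \in s -> Q j -> (e i j <= K)%N /\ (e' i j <= K)%N) ->
  (\prod_(i <- r) \prod_(j <- s | Q j) (A i j ^+ e i j * B i j ^+ e' i j)) *
  (\prod_(i <- r) \prod_(j <- s | Q j) (A i j ^+ (K - e i j) * B i j ^+ (K - e' i j)))
  = (\prod_(i <- r) \prod_(j <- s | Q j) A i j) ^+ K *
    (\prod_(i <- r) \prod_(j <- s | Q j) B i j) ^+ K.
Proof.
move=> h.
under eq_bigr do rewrite big_split /=.
under [X in _ * X]eq_bigr do rewrite big_split /=.
rewrite !big_split /= mulrACA split_pow2 ?split_pow2 //.
  by move=> i j ir js Qj; case: (h i j ir js Qj).
by move=> i j ir js Qj; case: (h i j ir js Qj).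
Qed.

Lemma facI_plus l v w z a Y : (0 < l)%N -> odd l -> (0 < v)%N ->
  (l ^ v).-primitive_root z ->
  \prod_(i < l ^ v) (Y + (a * z ^+ i)%:P) *
  \prod_(1 <= j < w.+1) \prod_(1 <= k < (l ^ v).+1 | ~~ (l %| k)%N)
      (Y ^+ (l ^ j) + (a ^+ (l ^ j) * z ^+ k)%:P)
  = Y ^+ (l ^ (v + w)) + (a ^+ (l ^ (v + w)))%:P.
Proof.
move=> l0 lo v0 hz; have := facI w (- a) Y l0 v0 hz.
have oj j : odd (l ^ j) by rewrite oddX lo orbT.
rewrite expN_odd // polyCN opprK => <-.
congr (_ * _).
  by apply: eq_bigr => i _; rewrite mulNr polyCN opprK.
apply: eq_bigr => j _; apply: eq_bigr => k _.
by rewrite expN_odd // mulNr polyCN opprK.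
Qed.

Lemma diff_sq Y c : (Y - c%:P) * (Y + c%:P) = Y ^+ 2 - (c ^+ 2)%:P.
Proof. by rewrite rmorphXn /=; ring. Qed.

Lemma facIb l v w z a (b : nat -> F) Y (Yp : nat -> {poly F}) : (0 < l)%N -> (0 < v)%N ->
  (l ^ v).-primitive_root z -> (forall j, b j = a ^+ (l ^ j)) ->
  (forall j, Yp j = Y ^+ (l ^ j)) ->
  \prod_(i < l ^ v) (Y - (a * z ^+ i)%:P) *
  \prod_(1 <= j < w.+1) \prod_(1 <= k < (l ^ v).+1 | ~~ (l %| k)%N)
      (Yp j - (b j * z ^+ k)%:P)
  = Y ^+ (l ^ (v + w)) - (a ^+ (l ^ (v + w)))%:P.
Proof.
move=> l0 v0 hz hb hY; rewrite -(facI w a Y l0 v0 hz); congr (_ * _).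
by apply: eq_bigr => j _; apply: eq_bigr => k _; rewrite hb hY.
Qed.

Lemma facI_plusb l v w z a (b : nat -> F) Y (Yp : nat -> {poly F}) : (0 < l)%N -> odd l -> (0 < v)%N ->
  (l ^ v).-primitive_root z -> (forall j, b j = a ^+ (l ^ j)) ->
  (forall j, Yp j = Y ^+ (l ^ j)) ->
  \prod_(i < l ^ v) (Y + (a * z ^+ i)%:P) *
  \prod_(1 <= j < w.+1) \prod_(1 <= k < (l ^ v).+1 | ~~ (l %| k)%N)
      (Yp j + (b j * z ^+ k)%:P)
  = Y ^+ (l ^ (v + w)) + (a ^+ (l ^ (v + w)))%:P.
Proof.
move=> l0 lo v0 hz hb hY; rewrite -(facI_plus w a Y l0 lo v0 hz); congr (_ * _).
by apply: eq_bigr => j _; apply: eq_bigr => k _; rewrite hb hY.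
Qed.

Lemma min_add (m u : nat) : (minn m u + (m - u) = m)%N.
Proof. lia. Qed.

Lemma prod_root_plus M z a Y : M.-primitive_root z -> odd M ->
  \prod_(i < M) (Y + (a * z ^+ i)%:P) = Y ^+ M + (a ^+ M)%:P.
Proof.
move=> hz oM; have := prod_root (- a) Y hz.
rewrite expN_odd // polyCN opprK => <-.
by apply: eq_bigr => i _; rewrite mulNr polyCN opprK.
Qed.

Lemma nat4 (a b c : nat) : (a * (b * (2 * c)) = 2 * a * b * c)%N.
Proof. lia. Qed.

End Alg.

End Aux.
Import Aux.

Theorem corollary4p2 (F : finFieldType) (p q l m n : nat) (xi lam : F)
    (C : {set 'rV[F]_(2 * l ^ m * p ^ n)}) :
  prime p -> odd p -> p \in [pchar F] -> #|F| = q ->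
  (q.-1).-primitive_root xi ->
  prime l -> odd l -> l != p -> (l %| q.-1)%N ->
  (0 < m)%N -> (0 < n)%N ->
  lam != 0 ->
  constacyclic lam C ->
  let N := (2 * l ^ m * p ^ n)%N in
  let u := logn l q.-1 in
  let v := minn m u in
  let zeta := xi ^+ (q.-1 %/ l ^ v)%N in
  [/\
  (* (I) *)
  (forall (c1 : F) (eps eps' : nat -> nat) (tau sig : nat -> nat -> nat),
    c1 != 0 -> c1 ^+ N * lam = 1 ->
    (forall i, i < l ^ v -> eps i <= p ^ n /\ eps' i <= p ^ n)%N ->
    (forall j k, 1 <= j <= m - u -> 1 <= k <= l ^ v -> ~~ (l %| k) ->
        tau j k <= p ^ n /\ sig j k <= p ^ n)%N ->
    generated_by lam
      ((\prod_(i < l ^ v) (('X - (c1^-1 * zeta ^+ i)%:P) ^+ eps i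
                          * ('X + (c1^-1 * zeta ^+ i)%:P) ^+ eps' i))
       * \prod_(1 <= j < (m - u).+1)
           \prod_(1 <= k < (l ^ v).+1 | ~~ (l %| k)%N)
             (('X^(l ^ j) - (c1 ^- (l ^ j) * zeta ^+ k)%:P) ^+ tau j k
              * ('X^(l ^ j) + (c1 ^- (l ^ j) * zeta ^+ k)%:P) ^+ sig j k)) C ->
    generated_by lam^-1
      ((\prod_(i < l ^ v) (('X - (c1 * zeta ^- i)%:P) ^+ (p ^ n - eps i)
                          * ('X + (c1 * zeta ^- i)%:P) ^+ (p ^ n - eps' i)))
       * \prod_(1 <= j < (m - u).+1)
           \prod_(1 <= k < (l ^ v).+1 | ~~ (l %| k)%N)
             (('X^(l ^ j) - (c1 ^+ (l ^ j) * zeta ^- k)%:P) ^+ (p ^ n - tau j k)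
              * ('X^(l ^ j) + (c1 ^+ (l ^ j) * zeta ^- k)%:P) ^+ (p ^ n - sig j k)))
      (dual_code C)
    /\ constacyclic lam^-1 (dual_code C)),
  (* (II.A) *)
  (forall (c2 : F) (eps : nat -> nat),
    (m <= u)%N -> c2 != 0 -> c2 ^+ N * lam = xi ^+ (l ^ v * p ^ n) ->
    let alpha := xi ^+ (q.-1 %/ l ^ m)%N in
    (forall i, i < l ^ m -> eps i <= p ^ n)%N ->
    generated_by lam
      (\prod_(i < l ^ m) ('X^2 - (c2 ^- 2 * xi * alpha ^+ i)%:P) ^+ eps i) C ->
    generated_by lam^-1
      (\prod_(i < l ^ m) ('X^2 - (c2 ^+ 2 * xi^-1 * alpha ^- i)%:P) ^+ (p ^ n - eps i))
      (dual_code C)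
    /\ constacyclic lam^-1 (dual_code C)),
  (* (II.B) *)
  (forall (c2 beta : F) (eps : nat -> nat) (sig : nat -> nat -> nat),
    (u < m)%N -> c2 != 0 -> c2 ^+ N * lam = xi ^+ (l ^ v * p ^ n) ->
    (exists k : nat, beta = (xi ^+ (l ^ u)) ^+ k) ->
    beta ^+ (l ^ m) * xi ^+ (l ^ u) = 1 ->
    (forall i, i < l ^ u -> eps i <= p ^ n)%N ->
    (forall j k, 1 <= j <= m - u -> 1 <= k <= l ^ u -> ~~ (l %| k) ->
        sig j k <= p ^ n)%N ->
    generated_by lam
      ((\prod_(i < l ^ u) ('X^2 - (c2 ^- 2 * beta^-1 * zeta ^+ i)%:P) ^+ eps i)
       * \prod_(1 <= j < (m - u).+1)
           \prod_(1 <= k < (l ^ u).+1 | ~~ (l %| k)%N)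
             ('X^(2 * l ^ j) - (c2 ^- (2 * l ^ j) * beta ^- (l ^ j) * zeta ^+ k)%:P)
               ^+ sig j k) C ->
    generated_by lam^-1
      ((\prod_(i < l ^ u) ('X^2 - (c2 ^+ 2 * beta * zeta ^- i)%:P) ^+ (p ^ n - eps i))
       * \prod_(1 <= j < (m - u).+1)
           \prod_(1 <= k < (l ^ u).+1 | ~~ (l %| k)%N)
             ('X^(2 * l ^ j) - (c2 ^+ (2 * l ^ j) * beta ^+ (l ^ j) * zeta ^- k)%:P)
               ^+ (p ^ n - sig j k))
      (dual_code C)
    /\ constacyclic lam^-1 (dual_code C)),
  (* (III.A) *)
  (forall (j y z : nat) (d1 : F) (eps : nat -> nat),
    (1 <= j <= 2 * l ^ v - 1)%N -> j != (l ^ v)%N ->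
    d1 != 0 -> d1 ^+ N * lam = xi ^+ (j * p ^ n) ->
    j = (y * l ^ z)%N -> coprime y l -> (z <= v - 1)%N ->
    let delta := xi ^+ (q.-1 %/ l ^ z)%N in
    odd y ->
    (forall i, i < l ^ z -> eps i <= p ^ n)%N ->
    generated_by lam
      (\prod_(i < l ^ z)
         ('X^(2 * l ^ (m - z)) - (d1 ^- (2 * l ^ (m - z)) * delta ^+ i * xi ^+ y)%:P)
           ^+ eps i) C ->
    generated_by lam^-1
      (\prod_(i < l ^ z)
         ('X^(2 * l ^ (m - z)) - (d1 ^+ (2 * l ^ (m - z)) * delta ^- i * xi ^- y)%:P)
           ^+ (p ^ n - eps i))
      (dual_code C)
    /\ constacyclic lam^-1 (dual_code C)) &
  (* (III.B) *)
  (forall (j y z y0 : nat) (d1 : F) (eps eps' : nat -> nat),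
    (1 <= j <= 2 * l ^ v - 1)%N -> j != (l ^ v)%N ->
    d1 != 0 -> d1 ^+ N * lam = xi ^+ (j * p ^ n) ->
    j = (y * l ^ z)%N -> coprime y l -> (z <= v - 1)%N ->
    let delta := xi ^+ (q.-1 %/ l ^ z)%N in
    y = (2 * y0)%N ->
    (forall i, i < l ^ z -> eps i <= p ^ n /\ eps' i <= p ^ n)%N ->
    generated_by lam
      (\prod_(i < l ^ z)
         (('X^(l ^ (m - z)) - (d1 ^- (l ^ (m - z)) * delta ^+ i * xi ^+ y0)%:P) ^+ eps i
          * ('X^(l ^ (m - z)) + (d1 ^- (l ^ (m - z)) * delta ^+ i * xi ^+ y0)%:P) ^+ eps' i))
      C ->
    generated_by lam^-1
      (\prod_(i < l ^ z)
         (('X^(l ^ (m - z)) - (d1 ^+ (l ^ (m - z)) * delta ^- i * xi ^- y0)%:P)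
            ^+ (p ^ n - eps i)
          * ('X^(l ^ (m - z)) + (d1 ^+ (l ^ (m - z)) * delta ^- i * xi ^- y0)%:P)
            ^+ (p ^ n - eps' i)))
      (dual_code C)
    /\ constacyclic lam^-1 (dual_code C))
  ].
Proof.
move=> pp podd pch hq prim lp lodd lnp ldv m0 n0 l0 cc N u v zeta.
have q1 : (0 < q.-1)%N := prim_order_gt0 prim.
have xi0 : xi != 0.
  apply/eqP=> x0; move: (prim_expr_order prim); rewrite x0 expr0n gtn_eqF //.
  by move/eqP; rewrite eq_sym oner_eq0.
have lgt0 : (0 < l)%N by apply: prime_gt0.
have u1 : (0 < u)%N.
  by rewrite -(pfactor_dvdn 1 lp q1) expn1.
have v0 : (0 < v)%N by rewrite /v; lia.
have N0 : (0 < N)%N by rewrite /N !muln_gt0 !expn_gt0 lgt0 (prime_gt0 pp).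
have dvdu k : (k <= u)%N -> (l ^ k %| q.-1)%N by move=> ku; rewrite pfactor_dvdn.
have hz : (l ^ v).-primitive_root zeta.
  exact: (dvdn_prim_root prim (dvdu _ (geq_minr _ _))).
have z0 : zeta != 0 by apply: expf_neq0.
have lj j : (0 < l ^ j)%N by rewrite expn_gt0 lgt0.
split.
- move=> c1 eps eps' tau sig c10 hc heps htau gen.
  have lam0 : lam != 0 by [].
  pose H := (\prod_(i < l ^ v) (('X - (c1^-1 * zeta ^+ i)%:P) ^+ (p ^ n - eps i)
                          * ('X + (c1^-1 * zeta ^+ i)%:P) ^+ (p ^ n - eps' i)))
       * \prod_(1 <= j < (m - u).+1)
           \prod_(1 <= k < (l ^ v).+1 | ~~ (l %| k)%N)
             (('X^(l ^ j) - (c1 ^- (l ^ j) * zeta ^+ k)%:P) ^+ (p ^ n - tau j k)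
              * ('X^(l ^ j) + (c1 ^- (l ^ j) * zeta ^+ k)%:P) ^+ (p ^ n - sig j k)).
  apply: (dual_core (h := H) N0 lam0 _ _ gen).
    rewrite /H mulrACA split_pair; last first.
      by move=> i _ _; apply: heps.
    rewrite split_pair2; last first.
      move=> j k; rewrite !mem_index_iota => /andP[j1 j2] /andP[k1 k2] kl.
      by apply: htau => //; [rewrite j1 /= -ltnS | rewrite k1 /= -ltnS].
    rewrite mulrACA -!exprMn.
    have hb j : c1 ^- (l ^ j) = c1^-1 ^+ (l ^ j) by rewrite exprVn.
    have F1 := facIb (Y := 'X) (Yp := fun j => 'X^(l ^ j)) (m - u) lgt0 v0 hz hb (fun j => erefl).
    have F2 := facI_plusb (Y := 'X) (Yp := fun j => 'X^(l ^ j)) (m - u) lgt0 lodd v0 hz hb (fun j => erefl).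
    rewrite F1 F2 diff_sq frob // -!exprM.
    have vw : (v + (m - u) = m)%N by apply: min_add.
    rewrite vw.
    have -> : (l ^ m * (2 * p ^ n))%N = N by rewrite /N mulnCA mulnA.
    congr (_ - _%:P); rewrite exprVn.
    apply: (mulIf (expf_neq0 N c10)); rewrite mulVf ?expf_neq0 //.
    by rewrite mulrC hc.
  apply: sc'M.
    apply: sc'_prod => i _; apply: sc'M; apply: sc'X.
      have := sc'_subX (mulf_neq0 (invr_neq0 c10) (expf_neq0 i z0)).
      by rewrite invfM invrK.
    have := sc'_addX (mulf_neq0 (invr_neq0 c10) (expf_neq0 i z0)).
    by rewrite invfM invrK.
  apply: sc'_prod => j _; apply: sc'_prod => k _; apply: sc'M; apply: sc'X.
    have := sc'_sub (lj j) (mulf_neq0 (invr_neq0 (expf_neq0 (l ^ j) c10)) (expf_neq0 k z0)).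
    by rewrite invfM invrK.
  have := sc'_add (lj j) (mulf_neq0 (invr_neq0 (expf_neq0 (l ^ j) c10)) (expf_neq0 k z0)).
  by rewrite invfM invrK.
- move=> c2 eps mu c20 hc2 alpha heps gen.
  have lam0 : lam != 0 by [].
  have vm : v = m by rewrite /v; apply/minn_idPl.
  have ha : (l ^ m).-primitive_root alpha by exact: (dvdn_prim_root prim (dvdu _ mu)).
  have a0 : alpha != 0 by apply: expf_neq0.
  pose H := \prod_(i < l ^ m) ('X^2 - (c2 ^- 2 * xi * alpha ^+ i)%:P) ^+ (p ^ n - eps i).
  apply: (dual_core (h := H) N0 lam0 _ _ gen).
    rewrite /H split_pow; last by move=> i _ _; apply: heps.
    rewrite prod_root // frob // -!exprM.
    congr (_ - _%:P); first by rewrite /N mulnA.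
    apply: (mulIf (expf_neq0 N c20)); rewrite [RHS]mulrC hc2 vm exprMn exprVn -exprM.
    rewrite (_ : (2 * (l ^ m * p ^ n))%N = N); last by rewrite /N mulnA.
    by rewrite mulrAC mulVf ?expf_neq0 // mul1r.
  apply: sc'_prod => i _; apply: sc'X.
  have := sc'_sub (isT : (0 < 2)%N) (mulf_neq0 (mulf_neq0 (invr_neq0 (expf_neq0 2 c20)) xi0) (expf_neq0 i a0)).
  by rewrite !invfM !invrK.
- move=> c2 beta eps sig um c20 hc2 _ hbl heps hsig gen.
  have lam0 : lam != 0 by [].
  have vu : v = u by rewrite /v; apply/minn_idPr; exact: ltnW.
  rewrite vu in hz.
  have b0 : beta != 0.
    apply/eqP => b0; move: hbl; rewrite b0 expr0n gtn_eqF // mul0r => /eqP.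
    by rewrite eq_sym oner_eq0.
  pose H := (\prod_(i < l ^ u) ('X^2 - (c2 ^- 2 * beta^-1 * zeta ^+ i)%:P) ^+ (p ^ n - eps i))
       * \prod_(1 <= j < (m - u).+1)
           \prod_(1 <= k < (l ^ u).+1 | ~~ (l %| k)%N)
             ('X^(2 * l ^ j) - (c2 ^- (2 * l ^ j) * beta ^- (l ^ j) * zeta ^+ k)%:P)
               ^+ (p ^ n - sig j k).
  apply: (dual_core (h := H) N0 lam0 _ _ gen).
    rewrite /H mulrACA split_pow; last by move=> i _ _; apply: heps.
    rewrite split_pow2; last first.
      move=> j k; rewrite !mem_index_iota => /andP[j1 j2] /andP[k1 k2] kl.
      by apply: hsig => //; [rewrite j1 /= -ltnS | rewrite k1 /= -ltnS].
    rewrite -exprMn.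
    have hb j : c2 ^- (2 * l ^ j) * beta ^- (l ^ j) = (c2 ^- 2 * beta^-1) ^+ (l ^ j).
      by rewrite exprMn !exprVn -exprM.
    have hY j : 'X^(2 * l ^ j) = ('X^2 : {poly F}) ^+ (l ^ j) by rewrite exprM.
    rewrite (facIb (Y := 'X^2) (Yp := fun j => 'X^(2 * l ^ j))
               (b := fun j => c2 ^- (2 * l ^ j) * beta ^- (l ^ j)) (m - u) lgt0 u1 hz hb hY).
    have um' : (u + (m - u) = m)%N by rewrite subnKC // ltnW.
    rewrite um' frob // -!exprM.
    congr (_ - _%:P); first by rewrite /N mulnA.
    apply: (mulIf (expf_neq0 N c20)); rewrite [RHS]mulrC hc2 vu exprMn exprVn -exprM.
    rewrite (_ : (2 * (l ^ m * p ^ n))%N = N); last by rewrite /N mulnA.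
    rewrite mulrAC mulVf ?expf_neq0 // mul1r.
    have hb' : (beta ^+ (l ^ m))^-1 = xi ^+ (l ^ u).
      by rewrite -[LHS]mulr1 -hbl mulrA mulVf ?expf_neq0 // mul1r.
    by rewrite exprM exprVn hb' -exprM.
  apply: sc'M.
    apply: sc'_prod => i _; apply: sc'X.
    have := sc'_sub (isT : (0 < 2)%N)
      (mulf_neq0 (mulf_neq0 (invr_neq0 (expf_neq0 2 c20)) (invr_neq0 b0)) (expf_neq0 i z0)).
    by rewrite !invfM !invrK.
  apply: sc'_prod => j _; apply: sc'_prod => k _; apply: sc'X.
  have l2j : (0 < 2 * l ^ j)%N by rewrite muln_gt0 lj.
  have := sc'_sub l2j (mulf_neq0 (mulf_neq0 (invr_neq0 (expf_neq0 (2 * l ^ j) c20))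
                         (invr_neq0 (expf_neq0 (l ^ j) b0))) (expf_neq0 k z0)).
  by rewrite !invfM !invrK.
- move=> j y z d1 eps hj jv d10 hd jy cop zv delta yodd heps gen.
  have lam0 : lam != 0 by [].
  have zv' : (z <= v)%N := leq_trans zv (leq_subr 1 v).
  have zu : (z <= u)%N := leq_trans zv' (geq_minr m u).
  have zm : (z <= m)%N := leq_trans zv' (geq_minl m u).
  have hdl : (l ^ z).-primitive_root delta by exact: (dvdn_prim_root prim (dvdu _ zu)).
  have dl0 : delta != 0 by apply: expf_neq0.
  pose H := \prod_(i < l ^ z)
         ('X^(2 * l ^ (m - z)) - (d1 ^- (2 * l ^ (m - z)) * delta ^+ i * xi ^+ y)%:P)
           ^+ (p ^ n - eps i).
  apply: (dual_core (h := H) N0 lam0 _ _ gen).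
    rewrite /H split_pow; last by move=> i _ _; apply: heps.
    under eq_bigr do rewrite mulrAC.
    rewrite prod_root // frob // -!exprM.
    have eN : (2 * l ^ (m - z) * (l ^ z * p ^ n))%N = N.
      by rewrite /N !mulnA -(mulnA 2) -expnD subnK.
    rewrite eN; congr (_ - _%:P).
    apply: (mulIf (expf_neq0 N d10)); rewrite [RHS]mulrC hd exprMn exprVn -!exprM eN.
    by rewrite mulrAC mulVf ?expf_neq0 // mul1r jy mulnA.
  apply: sc'_prod => i _; apply: sc'X.
  have A0 : (0 < 2 * l ^ (m - z))%N by rewrite muln_gt0 lj.
  have := sc'_sub A0 (mulf_neq0 (mulf_neq0 (invr_neq0 (expf_neq0 (2 * l ^ (m - z))%N d10)) (expf_neq0 i dl0))
                        (expf_neq0 y xi0)).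
  by rewrite !invfM !invrK.
- move=> j y z y0 d1 eps eps' hj jv d10 hd jy cop zv delta yy0 heps gen.
  have lam0 : lam != 0 by [].
  have zv' : (z <= v)%N := leq_trans zv (leq_subr 1 v).
  have zu : (z <= u)%N := leq_trans zv' (geq_minr m u).
  have zm : (z <= m)%N := leq_trans zv' (geq_minl m u).
  have hdl : (l ^ z).-primitive_root delta by exact: (dvdn_prim_root prim (dvdu _ zu)).
  have dl0 : delta != 0 by apply: expf_neq0.
  have lzo : odd (l ^ z) by rewrite oddX lodd orbT.
  pose H := \prod_(i < l ^ z)
         (('X^(l ^ (m - z)) - (d1 ^- (l ^ (m - z)) * delta ^+ i * xi ^+ y0)%:P) ^+ (p ^ n - eps i)
          * ('X^(l ^ (m - z)) + (d1 ^- (l ^ (m - z)) * delta ^+ i * xi ^+ y0)%:P) ^+ (p ^ n - eps' i)).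
  apply: (dual_core (h := H) N0 lam0 _ _ gen).
    rewrite /H split_pair; last by move=> i _ _; apply: heps.
    rewrite -exprMn.
    under eq_bigr do rewrite mulrAC.
    under [X in _ * X]eq_bigr do rewrite mulrAC.
    rewrite prod_root // prod_root_plus // diff_sq frob // -!exprM.
    have eN : (l ^ (m - z) * (l ^ z * (2 * p ^ n)))%N = N.
      by rewrite /N !mulnA -expnD subnK // (mulnC _ 2).
    rewrite eN; congr (_ - _%:P).
    apply: (mulIf (expf_neq0 N d10)); rewrite [RHS]mulrC hd exprMn exprVn -!exprM eN.
    rewrite mulrAC mulVf ?expf_neq0 // mul1r jy yy0.
    by rewrite nat4.
  apply: sc'_prod => i _; apply: sc'M; apply: sc'X.
    have := sc'_sub (lj (m - z)%N) (mulf_neq0 (mulf_neq0 (invr_neq0 (expf_neq0 (l ^ (m - z))%N d10))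
                         (expf_neq0 i dl0)) (expf_neq0 y0 xi0)).
    by rewrite !invfM !invrK.
  have := sc'_add (lj (m - z)%N) (mulf_neq0 (mulf_neq0 (invr_neq0 (expf_neq0 (l ^ (m - z))%N d10))
                       (expf_neq0 i dl0)) (expf_neq0 y0 xi0)).
  by rewrite !invfM !invrK.
Qed.
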